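(* There is an absolute constant $c>0$ such that the following holds. Let $G$ be a finite simple graph with maximum degree $d\ge 1$, and let $D(G)$ be a straight-line drawing of $G$ in the base plane $\mathcal{P}_1=\{z=0\}\subset\mathbb{R}^3$ with arbitrary but distinct vertex positions (no assumption on the angular resolution of $D(G)$). Then there is a slanted 3D arc diagram drawing of $G$ with base plane $\mathcal{P}_1$ and with the same vertex positions as $D(G)$ whose angular resolution is at least $c/\sqrt{d}$.
   Context: A slanted 3D arc diagram drawing of $G$ with base plane $\mathcal{P}_1=\{z=0\}$ is a placement of the vertices at distinct points of $\mathcal{P}_1$, together with, for each edge $e=(a,b)$, a circular arc (a contiguous subset of a circle; a straight segment is allowed as the degenerate case) with endpoints at the positions of $a$ and $b$, such that: the arc lies in a plane $\mathcal{P}_2$ that contains both endpoints and forms a dihedral angle $\beta_e\in[0,\pi/2)$ with $\mathcal{P}_1$; all arcs lie in the closed half-space $z\ge 0$; and within $\mathcal{P}_2$ the arc forms the same angle $\alpha_e\in[0,\pi/2]$ with the segment $ab$ at both of its endpoints. The angle between two arcs incident to a common vertex $v$ is the angle in $[0,\pi]$ between their tangent rays at $v$ (directed into the arcs). The angular resolution of the drawing is the minimum of this angle over all vertices $v$ and all pairs of distinct edges incident to $v$. *)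

(* Defs.v *)
From Stdlib Require Import Reals Lra List Arith.
Open Scope R_scope.

Definition V3 := (R * R * R)%type.
Definition vx (v : V3) : R := fst (fst v).
Definition vy (v : V3) : R := snd (fst v).
Definition vz (v : V3) : R := snd v.
Definition mkV (x y z : R) : V3 := (x, y, z).
Definition vadd (u v : V3) : V3 := mkV (vx u + vx v) (vy u + vy v) (vz u + vz v).
Definition vsub (u v : V3) : V3 := mkV (vx u - vx v) (vy u - vy v) (vz u - vz v).
Definition vscale (k : R) (v : V3) : V3 := mkV (k * vx v) (k * vy v) (k * vz v).
Definition dot (u v : V3) : R := vx u * vx v + vy u * vy v + vz u * vz v.
Definition vnorm (v : V3) : R := sqrt (dot v v).
Definition vunit (v : V3) : V3 := vscale (/ vnorm v) v.
Definition cross (u v : V3) : V3 :=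
  mkV (vy u * vz v - vz u * vy v) (vz u * vx v - vx u * vz v) (vx u * vy v - vy u * vx v).

Definition vangle (u v : V3) : R := acos (dot u v / (vnorm u * vnorm v)).

Definition lift (q : R * R) : V3 := mkV (fst q) (snd q) 0.

Definition simple_graph (n : nat) (adj : nat -> nat -> bool) : Prop :=
  (forall a b, adj a b = adj b a) /\
  (forall a, adj a a = false) /\
  (forall a b, adj a b = true -> (a < n)%nat /\ (b < n)%nat).

Definition degree (n : nat) (adj : nat -> nat -> bool) (v : nat) : nat :=
  length (filter (adj v) (seq 0 n)).

Definition max_degree (n : nat) (adj : nat -> nat -> bool) (d : nat) : Prop :=
  (forall v, (v < n)%nat -> (degree n adj v <= d)%nat) /\
  (exists v, (v < n)%nat /\ degree n adj v = d).

Definition distinct_positions (n : nat) (pos : nat -> R * R) : Prop :=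
  forall a b, (a < n)%nat -> (b < n)%nat -> a <> b -> pos a <> pos b.

(** Data of a (symmetric) circular arc between two points a, b:
    - arc_alpha : the angle alpha in [0, pi/2] that the arc makes with the
      segment ab at both endpoints (within its plane P2);
    - arc_W : the unit vector of P2 orthogonal to ab pointing to the side
      of the chord on which the arc lies (P2 = a + span(b - a, W)). *)
Record arc := mkArc { arc_alpha : R; arc_W : V3 }.

(** The point set of the arc with data (alpha, W) joining a and b:
    writing m the midpoint, u the unit chord direction and L = |ab|/2,
    points are m + x u + y W with
    - alpha = 0 : the straight segment (y = 0, -L <= x <= L);
    - alpha > 0 : the part y >= 0 of the circle x^2 + (y + r cos alpha)^2 = r^2,
      r = L / sin alpha (a contiguous arc of that circle with endpoints a, b,
      meeting the chord at angle alpha at both ends). *)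
Definition arc_points (a b : V3) (alpha : R) (W : V3) (P : V3) : Prop :=
  let u := vunit (vsub b a) in
  let L := vnorm (vsub b a) / 2 in
  let m := vadd a (vscale (1/2) (vsub b a)) in
  exists x y : R,
    P = vadd m (vadd (vscale x u) (vscale y W)) /\
    ((alpha = 0 /\ y = 0 /\ - L <= x <= L) \/
     (0 < alpha /\ 0 <= y /\
      let r := L / sin alpha in
      x ^ 2 + (y + r * cos alpha) ^ 2 = r ^ 2)).

(** Unit tangent ray of the arc at endpoint a (directed into the arc, the arc
    going from a to b): rotation of the chord direction by alpha towards W
    inside P2. *)
Definition arc_tangent (a b : V3) (A : arc) : V3 :=
  vadd (vscale (cos (arc_alpha A)) (vunit (vsub b a)))
       (vscale (sin (arc_alpha A)) (arc_W A)).

(** Conditions for a slanted arc joining a and b in the base plane: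
    alpha in [0, pi/2]; W a unit vector orthogonal to ab; the plane
    P2 = a + span(b-a, W) forms a dihedral angle beta in [0, pi/2) with P1
    (beta measured between unit normals); the arc lies in z >= 0. *)
Definition valid_slanted_arc (a b : V3) (A : arc) : Prop :=
  0 <= arc_alpha A <= PI / 2 /\
  vnorm (arc_W A) = 1 /\
  dot (arc_W A) (vsub b a) = 0 /\
  (exists beta, 0 <= beta < PI / 2 /\
     cos beta = Rabs (dot (vunit (cross (vsub b a) (arc_W A))) (mkV 0 0 1))) /\
  (forall P, arc_points a b (arc_alpha A) (arc_W A) P -> 0 <= vz P).

Definition slanted_arc_drawing (n : nat) (adj : nat -> nat -> bool)
    (pos : nat -> R * R) (Arc : nat -> nat -> arc) : Prop :=
  forall a b, adj a b = true ->
    Arc a b = Arc b a /\ valid_slanted_arc (lift (pos a)) (lift (pos b)) (Arc a b).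

Definition angular_resolution_ge (n : nat) (adj : nat -> nat -> bool)
    (pos : nat -> R * R) (Arc : nat -> nat -> arc) (theta : R) : Prop :=
  forall v w1 w2, adj v w1 = true -> adj v w2 = true -> w1 <> w2 ->
    theta <= vangle (arc_tangent (lift (pos v)) (lift (pos w1)) (Arc v w1))
                    (arc_tangent (lift (pos v)) (lift (pos w2)) (Arc v w2)).

(* Main.v *)
Require Import Defs.
From Stdlib Require Import Reals Lra List Arith Lia Classical.
Open Scope nat_scope.

Lemma len_filter_rm (x : nat) (l : list nat) : NoDup l -> In x l ->
  S (length (filter (fun j => negb (Nat.eqb j x)) l)) = length l.
Proof.
  induction l as [|y l IH]; intros Hn Hi; [destruct Hi|].
  inversion Hn; subst. simpl.
  destruct (Nat.eqb_spec y x) as [E|E]; simpl.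
  - subst. f_equal. clear IH Hi Hn H2. induction l as [|z l IH2]; simpl; auto.
    destruct (Nat.eqb_spec z x); simpl. subst; exfalso; apply H1; left; auto.
    f_equal; apply IH2; intro; apply H1; right; auto.
  - f_equal. apply IH; auto. destruct Hi; [congruence|auto].
Qed.

Lemma pigeon {X : Type} (P : X -> nat -> Prop) (cs : list X) : forall (l : list nat),
  NoDup l -> length cs < length l ->
  (forall c, In c cs -> forall i j, In i l -> In j l -> P c i -> P c j -> i = j) ->
  exists k, In k l /\ forall c, In c cs -> ~ P c k.
Proof.
  induction cs as [|c cs IH]; intros l Hn Hlen Hu.
  - destruct l as [|k l]; simpl in Hlen; [lia|]. exists k; split; [left; auto|]. intros c [].
  - simpl in Hlen.
    destruct (classic (exists i, In i l /\ P c i)) as [[i0 [Hi0 Pi0]]|Hno].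
    + set (l' := filter (fun j => negb (Nat.eqb j i0)) l).
      pose proof (len_filter_rm i0 l Hn Hi0) as HL. fold l' in HL.
      assert (Hsub : forall k, In k l' -> In k l /\ k <> i0).
      { intros k Hk. unfold l' in Hk. apply filter_In in Hk. destruct Hk as [H1 H2].
        split; auto. apply Bool.negb_true_iff, Nat.eqb_neq in H2. auto. }
      destruct (IH l') as [k [Hk Hall]].
      * apply NoDup_filter; auto.
      * lia.
      * intros c' Hc' i j Hi Hj. apply (Hu c'); [right; auto| apply Hsub; auto | apply Hsub; auto].
      * exists k. destruct (Hsub k Hk) as [Hkl Hki]. split; auto.
        intros c' [Ec|Hc']; [subst c'|apply Hall; auto].
        intro Pk. apply Hki. apply (Hu c (or_introl eq_refl)); auto.
    + destruct (IH l) as [k [Hk Hall]]; auto; try lia.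
      * intros c' Hc'; apply Hu; right; auto.
      * exists k; split; auto. intros c' [Ec|Hc']; [subst c'|apply Hall; auto].
        intro Pk; apply Hno; exists k; auto.
Qed.

Lemma filter_lt (p q : nat -> bool) (w : nat) (l : list nat) :
  (forall x, q x = true -> p x = true) -> In w l -> p w = true -> q w = false ->
  length (filter q l) < length (filter p l).
Proof.
  intros Hqp. induction l as [|y l IH]; intros Hi Hp Hq; [destruct Hi|].
  assert (Hle : forall l, length (filter q l) <= length (filter p l)).
  { clear -Hqp. intros l; induction l as [|z l IH]; simpl; auto.
    destruct (q z) eqn:E1. rewrite (Hqp z E1); simpl; lia.
    destruct (p z); simpl; lia. }
  simpl. destruct Hi as [<-|Hi].
  - rewrite Hp, Hq; simpl. specialize (Hle l). lia.
  - specialize (IH Hi Hp Hq). destruct (q y) eqn:E1.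
    + rewrite (Hqp y E1); simpl; lia.
    + destruct (p y); simpl; lia.
Qed.
Open Scope R_scope.

Definition nrm (p q : R * R) : R :=
  sqrt ((fst q - fst p) * (fst q - fst p) + (snd q - snd p) * (snd q - snd p)).
Definition ex (p q : R*R) : R := (fst q - fst p) / nrm p q.
Definition ey (p q : R*R) : R := (snd q - snd p) / nrm p q.

Lemma nrm_sym p q : nrm q p = nrm p q.
Proof. unfold nrm; f_equal; ring. Qed.

Lemma nrm_pos p q : p <> q -> 0 < nrm p q.
Proof.
  intro H; unfold nrm; apply sqrt_lt_R0.
  destruct p as [px py], q as [qx qy]; simpl.
  destruct (Req_dec px qx) as [E1|E1]; destruct (Req_dec py qy) as [E2|E2].
  - subst; congruence.
  - assert (0 < (qy-py)*(qy-py)) by (apply Rsqr_pos_lt; lra).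
    assert (0 <= (qx-px)*(qx-px)) by nra. lra.
  - assert (0 < (qx-px)*(qx-px)) by (apply Rsqr_pos_lt; lra).
    assert (0 <= (qy-py)*(qy-py)) by nra. lra.
  - assert (0 < (qx-px)*(qx-px)) by (apply Rsqr_pos_lt; lra).
    assert (0 <= (qy-py)*(qy-py)) by nra. lra.
Qed.

Lemma ex_ey_1 p q : p <> q -> ex p q * ex p q + ey p q * ey p q = 1.
Proof.
  intro H. pose proof (nrm_pos p q H) as Hp.
  assert (E : nrm p q * nrm p q = (fst q - fst p) * (fst q - fst p) + (snd q - snd p) * (snd q - snd p)).
  { unfold nrm. apply sqrt_sqrt. apply Rplus_le_le_0_compat; apply Rle_0_sqr. }
  unfold ex, ey.
  replace ((fst q - fst p) / nrm p q * ((fst q - fst p) / nrm p q) +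
   (snd q - snd p) / nrm p q * ((snd q - snd p) / nrm p q)) with
   (((fst q - fst p) * (fst q - fst p) + (snd q - snd p) * (snd q - snd p)) / (nrm p q * nrm p q))
   by (field; lra).
  rewrite <- E. field. lra.
Qed.

Lemma ex_sym p q : ex q p = - ex p q.
Proof. unfold ex; rewrite nrm_sym; unfold Rdiv; ring. Qed.
Lemma ey_sym p q : ey q p = - ey p q.
Proof. unfold ey; rewrite nrm_sym; unfold Rdiv; ring. Qed.

Lemma chord_eq p q : p <> q ->
  vsub (lift q) (lift p) = mkV (nrm p q * ex p q) (nrm p q * ey p q) 0.
Proof.
  intro H. pose proof (nrm_pos p q H).
  unfold vsub, lift, ex, ey, vx, vy, vz, mkV; simpl. f_equal; [f_equal|]; field; lra.
Qed.

Lemma unit_chord_eq p q :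
  vunit (vsub (lift q) (lift p)) = mkV (ex p q) (ey p q) 0.
Proof.
  unfold vunit, vnorm, dot, vscale, vsub, lift, ex, ey, nrm, vx, vy, vz, mkV; simpl.
  replace ((fst q - fst p) * (fst q - fst p) + (snd q - snd p) * (snd q - snd p) + (0 - 0) * (0 - 0))
    with ((fst q - fst p) * (fst q - fst p) + (snd q - snd p) * (snd q - snd p)) by ring.
  f_equal; [f_equal|]; unfold Rdiv; ring.
Qed.

Lemma beta_exists (X : V3) : vz X <> 0 ->
  exists beta, 0 <= beta < PI / 2 /\
     cos beta = Rabs (dot (vunit X) (mkV 0 0 1)).
Proof.
  intro H.
  assert (Hz : 0 < vz X * vz X) by (apply Rsqr_pos_lt; exact H).
  assert (Hd : dot X X = vx X * vx X + vy X * vy X + vz X * vz X) by reflexivity.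
  assert (Hn : 0 < vnorm X).
  { unfold vnorm; apply sqrt_lt_R0. rewrite Hd. nra. }
  assert (Hr : Rabs (dot (vunit X) (mkV 0 0 1)) = Rabs (vz X) / vnorm X).
  { unfold vunit, dot, vscale, mkV, vx, vy, vz; simpl.
    replace (/ vnorm X * fst (fst X) * 0 + / vnorm X * snd (fst X) * 0 + / vnorm X * snd X * 1)
      with (snd X / vnorm X) by (unfold Rdiv; ring).
    unfold Rdiv. rewrite Rabs_mult. rewrite (Rabs_right (/ vnorm X)). reflexivity.
    left; apply Rinv_0_lt_compat; lra. }
  assert (Hle : Rabs (vz X) <= vnorm X).
  { unfold vnorm. rewrite <- sqrt_Rsqr_abs. apply sqrt_le_1_alt. rewrite Hd. unfold Rsqr. nra. }
  assert (Hpos : 0 < Rabs (vz X)) by (apply Rabs_pos_lt; exact H).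
  set (r := Rabs (vz X) / vnorm X).
  assert (0 < r <= 1).
  { unfold r; split. apply Rdiv_lt_0_compat; lra.
    apply (Rmult_le_reg_r (vnorm X)); [lra|]. unfold Rdiv; rewrite Rmult_assoc, Rinv_l; lra. }
  exists (acos r). rewrite Hr. fold r. rewrite cos_acos by lra.
  pose proof (acos_bound r). split; [split|]; try lra.
  assert (acos r <= PI/2).
  { apply (cos_decr_0 (PI/2) (acos r)); try lra. rewrite cos_acos, cos_PI2 by lra. lra. }
  destruct (Req_dec (acos r) (PI/2)) as [E|E]; [|lra].
  exfalso. assert (Hc : cos (acos r) = cos (PI/2)) by (rewrite E; reflexivity).
  rewrite cos_acos in Hc by lra. rewrite cos_PI2 in Hc. lra.
Qed.

Definition mkW (A B H e1 e2 : R) : V3 :=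
  let sa := sin (acos A) in mkV (- B * e2 / sa) (B * e1 / sa) (H / sa).

Lemma sa_facts A : 0 <= A < 1 -> 0 < sin (acos A) /\ sin (acos A) * sin (acos A) = 1 - A * A.
Proof.
  intro HA. rewrite sin_acos by lra.
  assert (0 < 1 - A²) by (unfold Rsqr; nra).
  split. apply sqrt_lt_R0; lra. rewrite sqrt_sqrt by lra. unfold Rsqr; ring.
Qed.

Lemma arc_valid (a b : R*R) (A B H e1 e2 t : R) :
  0 <= A < 1 -> 0 <= H -> 0 < B -> A*A+B*B+H*H = 1 -> e1*e1+e2*e2 = 1 -> t <> 0 ->
  vsub (lift b) (lift a) = mkV (t*e1) (t*e2) 0 ->
  valid_slanted_arc (lift a) (lift b) (mkArc (acos A) (mkW A B H e1 e2)).
Proof.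
  intros HA HH HB Hs He Ht Hc.
  destruct (sa_facts A HA) as [Hsa Hsa2].
  set (sa := sin (acos A)) in *.
  unfold valid_slanted_arc; simpl. split; [|split; [|split; [|split]]].
  - pose proof (acos_bound A). split; [lra|].
    apply (cos_decr_0 (PI/2) (acos A)); try lra. rewrite cos_acos, cos_PI2 by lra. lra.
  - unfold vnorm. replace (dot (mkW A B H e1 e2) (mkW A B H e1 e2)) with 1. apply sqrt_1.
    unfold mkW, dot, mkV, vx, vy, vz; simpl. fold sa.
    replace (- B * e2 / sa * (- B * e2 / sa) + B * e1 / sa * (B * e1 / sa) + H / sa * (H / sa))
      with ((B*B*(e1*e1+e2*e2) + H*H)/(sa*sa)) by (field; lra).
    rewrite He, Hsa2. replace (B*B*1+H*H) with (1-A*A) by lra. field. nra.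
  - rewrite Hc. unfold mkW, dot, mkV, vx, vy, vz; simpl. unfold Rdiv; ring.
  - apply beta_exists. rewrite Hc. unfold mkW, cross, mkV, vx, vy, vz; simpl. fold sa.
    replace (t * e1 * (B * e1 / sa) - t * e2 * (- B * e2 / sa)) with (t * B * (e1*e1+e2*e2) / sa)
      by (field; lra).
    rewrite He. intro E. assert (E2 : t * B = 0).
    { replace (t*B) with (t * B * 1 / sa * sa) by (field; lra). rewrite E. ring. }
    apply Rmult_integral in E2. destruct E2; lra.
  - intros P [x [y [HP Hor]]]. subst P.
    assert (Hy : 0 <= y) by (destruct Hor as [[_ [-> _]]|[_ [? _]]]; lra).
    unfold vadd, vscale, vunit, mkW, vsub, lift, mkV, vx, vy, vz; simpl. fold sa.
    match goal with |- 0 <= ?e => replace e with (y*(H/sa)) by ring end.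
    apply Rmult_le_pos; [lra|]. unfold Rdiv; apply Rmult_le_pos; [lra|]; left; apply Rinv_0_lt_compat; lra.
Qed.

Definition sqd (x y : V3) : R := dot (vsub x y) (vsub x y).

Lemma arc_tan (a b : R*R) A B H e1 e2 sg :
  0 <= A < 1 -> vunit (vsub (lift b) (lift a)) = mkV (sg*e1) (sg*e2) 0 ->
  arc_tangent (lift a) (lift b) (mkArc (acos A) (mkW A B H e1 e2)) =
  mkV (sg*A*e1 - B*e2) (sg*A*e2 + B*e1) H.
Proof.
  intros HA Hu. destruct (sa_facts A HA) as [Hsa _].
  unfold arc_tangent; simpl. rewrite Hu, cos_acos by lra.
  unfold mkW, vadd, vscale, mkV, vx, vy, vz; simpl.
  f_equal; [f_equal|]; field; lra.
Qed.

Lemma tan_unit A B H e1 e2 sg :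
  A*A+B*B+H*H = 1 -> e1*e1+e2*e2 = 1 -> sg*sg = 1 ->
  dot (mkV (sg*A*e1 - B*e2) (sg*A*e2 + B*e1) H) (mkV (sg*A*e1 - B*e2) (sg*A*e2 + B*e1) H) = 1.
Proof.
  intros H1 H2 H3. unfold dot, mkV, vx, vy, vz; simpl.
  replace ((sg * A * e1 - B * e2) * (sg * A * e1 - B * e2) +
    (sg * A * e2 + B * e1) * (sg * A * e2 + B * e1) + H * H)
   with ((sg*sg*A*A + B*B)*(e1*e1+e2*e2) + H*H) by ring.
  rewrite H2, H3. lra.
Qed.

Lemma tan_dist A B H A' B' H' e1 e2 sg :
  e1*e1+e2*e2 = 1 -> sg*sg = 1 ->
  sqd (mkV (sg*A*e1 - B*e2) (sg*A*e2 + B*e1) H) (mkV (sg*A'*e1 - B'*e2) (sg*A'*e2 + B'*e1) H')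
  = (A-A')*(A-A') + (B-B')*(B-B') + (H-H')*(H-H').
Proof.
  intros H2 H3. unfold sqd, vsub, dot, mkV, vx, vy, vz; simpl.
  match goal with |- ?l = _ => replace l with
   ((sg*sg*(A-A')*(A-A') + (B-B')*(B-B'))*(e1*e1+e2*e2) + (H-H')*(H-H')) by ring end.
  rewrite H2, H3. ring.
Qed.

Lemma sqd_tri x y z : sqd x z <= 2 * sqd x y + 2 * sqd y z.
Proof.
  unfold sqd, vsub, dot, mkV, vx, vy, vz; simpl.
  destruct x as [[x1 x2] x3], y as [[y1 y2] y3], z as [[z1 z2] z3]; simpl.
  pose proof (Rle_0_sqr (x1 - 2*y1 + z1)).
  pose proof (Rle_0_sqr (x2 - 2*y2 + z2)).
  pose proof (Rle_0_sqr (x3 - 2*y3 + z3)). unfold Rsqr in *. nra.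
Qed.

Lemma sqd_sym x y : sqd x y = sqd y x.
Proof. unfold sqd, vsub, dot, mkV, vx, vy, vz; simpl. ring. Qed.

Lemma angle_lb x y rho : dot x x = 1 -> dot y y = 1 -> 0 <= rho <= 1 ->
  rho * rho <= sqd x y -> rho <= vangle x y.
Proof.
  intros Hx Hy Hr Hd. unfold vangle, vnorm. rewrite Hx, Hy, sqrt_1.
  replace (dot x y / (1*1)) with (dot x y) by field.
  assert (Hs : sqd x y = 2 - 2 * dot x y).
  { unfold sqd, vsub, dot, mkV, vx, vy, vz in *; simpl in *. lra. }
  assert (Hlow : -1 <= dot x y).
  { assert (0 <= dot (vadd x y) (vadd x y)).
    { unfold dot, vadd, mkV, vx, vy, vz; simpl.
      pose proof (Rle_0_sqr (fst (fst x) + fst (fst y))).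
      pose proof (Rle_0_sqr (snd (fst x) + snd (fst y))).
      pose proof (Rle_0_sqr (snd x + snd y)). unfold Rsqr in *. lra. }
    unfold dot, vadd, mkV, vx, vy, vz in *; simpl in *. lra. }
  assert (Hc : 1 - rho*rho/2 <= cos rho).
  { pose proof (cos_bound rho 0) as Hb.
    assert (PI/2 > 1) by (pose proof PI2_1; lra).
    destruct Hb as [Hb _]; try lra.
    replace (cos_approx rho (2 * 0 + 1)) with (1 - rho*rho/2) in Hb
      by (unfold cos_approx, cos_term; simpl; field). lra. }
  pose proof PI_RGT_0. pose proof PI2_1.
  apply (cos_decr_0 (acos (dot x y)) rho).
  - apply acos_bound.
  - apply acos_bound.
  - lra.
  - lra.
  - assert (0 <= rho*rho) by nra. rewrite cos_acos by lra. lra.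
Qed.

Definition mm (d : nat) : nat := 2 * (Nat.sqrt d + 1).
Definition KK (d : nat) : nat := mm d * mm d.
Definition ss (d : nat) : R := / (2 * INR (mm d)).
Definition PA (d k : nat) : R := ss d * INR ((k / mm d) mod mm d).
Definition PH (d k : nat) : R := ss d * INR (k mod mm d).
Definition PB (d k : nat) : R := sqrt (1 - PA d k * PA d k - PH d k * PH d k).

Lemma mm_pos d : (2 <= mm d)%nat.
Proof. unfold mm; lia. Qed.

Lemma coord_bound d j : (j < mm d)%nat -> 0 <= ss d * INR j < 1/2.
Proof.
  intro Hj. pose proof (mm_pos d) as Hm.
  assert (Hm' : 2 <= INR (mm d)) by (replace 2 with (INR 2) by (simpl; ring); apply le_INR; lia).
  assert (HJ : INR j + 1 <= INR (mm d)) by (rewrite <- S_INR; apply le_INR; lia).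
  pose proof (pos_INR j). unfold ss.
  split. apply Rmult_le_pos; [left; apply Rinv_0_lt_compat; lra| lra].
  apply (Rmult_lt_reg_l (2 * INR (mm d))); [lra|].
  rewrite <- Rmult_assoc, Rinv_r by lra. lra.
Qed.

Lemma pal_facts d k :
  0 <= PA d k < 1/2 /\ 0 <= PH d k < 1/2 /\ 0 < PB d k /\
  PA d k * PA d k + PB d k * PB d k + PH d k * PH d k = 1.
Proof.
  pose proof (mm_pos d).
  assert (HA := coord_bound d ((k / mm d) mod mm d) ltac:(apply Nat.mod_upper_bound; lia)).
  assert (HH := coord_bound d (k mod mm d) ltac:(apply Nat.mod_upper_bound; lia)).
  fold (PA d k) in HA. fold (PH d k) in HH.
  assert (0 < 1 - PA d k * PA d k - PH d k * PH d k) by nra.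
  unfold PB. split; [lra|split; [lra|split]].
  apply sqrt_lt_R0; lra. rewrite sqrt_sqrt by lra. ring.
Qed.

Lemma nat_diff_sq (a b : nat) : a <> b -> 1 <= (INR a - INR b) * (INR a - INR b).
Proof.
  intro H. destruct (Nat.lt_gt_cases a b) as [[Hl|Hl] _]; auto.
  - assert (INR a + 1 <= INR b) by (rewrite <- S_INR; apply le_INR; lia). nra.
  - assert (INR b + 1 <= INR a) by (rewrite <- S_INR; apply le_INR; lia). nra.
Qed.

Lemma pal_sep d i j : (i < KK d)%nat -> (j < KK d)%nat -> i <> j ->
  ss d * ss d <= (PA d i - PA d j) * (PA d i - PA d j) + (PB d i - PB d j) * (PB d i - PB d j)
     + (PH d i - PH d j) * (PH d i - PH d j).
Proof.
  intros Hi Hj Hij. pose proof (mm_pos d) as Hm. unfold KK in *.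
  set (m := mm d) in *.
  assert (Hdi : (i / m < m)%nat) by (apply Nat.Div0.div_lt_upper_bound; lia).
  assert (Hdj : (j / m < m)%nat) by (apply Nat.Div0.div_lt_upper_bound; lia).
  assert (Hne : (i / m) mod m <> (j / m) mod m \/ i mod m <> j mod m).
  { rewrite !Nat.mod_small by auto.
    destruct (Nat.eq_dec (i/m) (j/m)) as [E|E]; [right|left; auto].
    intro E2. apply Hij. rewrite (Nat.div_mod_eq i m), (Nat.div_mod_eq j m), E, E2. reflexivity. }
  assert (X1 : 0 <= (PB d i - PB d j) * (PB d i - PB d j)) by apply Rle_0_sqr.
  assert (X2 : 0 <= (PA d i - PA d j) * (PA d i - PA d j)) by apply Rle_0_sqr.
  assert (X3 : 0 <= (PH d i - PH d j) * (PH d i - PH d j)) by apply Rle_0_sqr.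
  assert (0 <= ss d * ss d) by apply Rle_0_sqr.
  unfold PA, PH in X1, X2, X3 |- *. fold m in X1, X2, X3 |- *.
  destruct Hne as [Hn|Hn]; apply nat_diff_sq in Hn.
  - replace ((ss d * INR ((i / m) mod m) - ss d * INR ((j / m) mod m)) *
      (ss d * INR ((i / m) mod m) - ss d * INR ((j / m) mod m))) with
      (ss d * ss d * ((INR ((i / m) mod m) - INR ((j / m) mod m)) * (INR ((i / m) mod m) - INR ((j / m) mod m))))
      in * by ring. nra.
  - replace ((ss d * INR (i mod m) - ss d * INR (j mod m)) *
      (ss d * INR (i mod m) - ss d * INR (j mod m))) with
      (ss d * ss d * ((INR (i mod m) - INR (j mod m)) * (INR (i mod m) - INR (j mod m))))
      in * by ring. nra.
Qed.

Definition ArcK (pos : nat -> R*R) (d a b k : nat) : arc :=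
  let lo := Nat.min a b in let hi := Nat.max a b in
  mkArc (acos (PA d k)) (mkW (PA d k) (PB d k) (PH d k) (ex (pos lo) (pos hi)) (ey (pos lo) (pos hi))).

Definition TanK (pos : nat -> R*R) (d a b k : nat) : V3 :=
  let lo := Nat.min a b in let hi := Nat.max a b in
  let e1 := ex (pos lo) (pos hi) in let e2 := ey (pos lo) (pos hi) in
  let sg := if Nat.ltb a b then 1 else -1 in
  mkV (sg * PA d k * e1 - PB d k * e2) (sg * PA d k * e2 + PB d k * e1) (PH d k).

Lemma ArcK_sym pos d a b k : ArcK pos d a b k = ArcK pos d b a k.
Proof. unfold ArcK. rewrite Nat.min_comm, Nat.max_comm. reflexivity. Qed.

Lemma tanK_eq pos d a b k : a <> b -> pos a <> pos b ->
  arc_tangent (lift (pos a)) (lift (pos b)) (ArcK pos d a b k) = TanK pos d a b k.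
Proof.
  intros Hab Hp. destruct (pal_facts d k) as [HA _].
  unfold ArcK, TanK.
  destruct (Nat.lt_gt_cases a b) as [[Hl|Hl] _]; auto.
  - rewrite (Nat.min_l a b), (Nat.max_r a b) by lia.
    replace (Nat.ltb a b) with true by (symmetry; apply Nat.ltb_lt; auto).
    apply arc_tan. lra. rewrite unit_chord_eq. f_equal; [f_equal|]; ring.
  - rewrite (Nat.min_r a b), (Nat.max_l a b) by lia.
    replace (Nat.ltb a b) with false by (symmetry; apply Nat.ltb_ge; lia).
    apply arc_tan. lra. rewrite unit_chord_eq, (ex_sym (pos b)), (ey_sym (pos b)).
    f_equal; [f_equal|]; ring.
Qed.

Lemma arcK_valid pos d a b k : a <> b -> pos a <> pos b ->
  valid_slanted_arc (lift (pos a)) (lift (pos b)) (ArcK pos d a b k).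
Proof.
  intros Hab Hp. destruct (pal_facts d k) as [HA [HH [HB Hs]]].
  unfold ArcK.
  destruct (Nat.lt_gt_cases a b) as [[Hl|Hl] _]; auto.
  - rewrite (Nat.min_l a b), (Nat.max_r a b) by lia.
    apply (arc_valid _ _ _ _ _ _ _ (nrm (pos a) (pos b))); try lra.
    apply ex_ey_1; auto. pose proof (nrm_pos _ _ Hp); lra.
    apply chord_eq; auto.
  - rewrite (Nat.min_r a b), (Nat.max_l a b) by lia.
    apply (arc_valid _ _ _ _ _ _ _ (- nrm (pos b) (pos a))); try lra.
    apply ex_ey_1; auto. pose proof (nrm_pos (pos b) (pos a) ltac:(auto)); lra.
    rewrite chord_eq by auto. rewrite (ex_sym (pos b)), (ey_sym (pos b)), nrm_sym.
    unfold mkV; f_equal; try f_equal; ring.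
Qed.

Lemma tanK_unit pos d a b k : a <> b -> pos a <> pos b -> dot (TanK pos d a b k) (TanK pos d a b k) = 1.
Proof.
  intros Hab Hp. destruct (pal_facts d k) as [HA [HH [HB Hs]]].
  unfold TanK. apply tan_unit; auto.
  apply ex_ey_1. destruct (Nat.lt_gt_cases a b) as [[Hl|Hl] _]; auto.
  rewrite (Nat.min_l a b), (Nat.max_r a b) by lia; auto.
  rewrite (Nat.min_r a b), (Nat.max_l a b) by lia; auto.
  destruct (Nat.ltb a b); ring.
Qed.

Lemma tanK_sep pos d a b i j : a <> b -> pos a <> pos b -> (i < KK d)%nat -> (j < KK d)%nat -> i <> j ->
  ss d * ss d <= sqd (TanK pos d a b i) (TanK pos d a b j).
Proof.
  intros Hab Hp Hi Hj Hij. unfold TanK. rewrite tan_dist. apply pal_sep; auto.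
  apply ex_ey_1. destruct (Nat.lt_gt_cases a b) as [[Hl|Hl] _]; auto.
  rewrite (Nat.min_l a b), (Nat.max_r a b) by lia; auto.
  rewrite (Nat.min_r a b), (Nat.max_l a b) by lia; auto.
  destruct (Nat.ltb a b); ring.
Qed.

Section Build.
Variables (n : nat) (adj : nat -> nat -> bool) (pos : nat -> R * R) (d : nat).
Hypothesis Hg : simple_graph n adj.
Hypothesis Hdeg : max_degree n adj d.
Hypothesis Hpos : distinct_positions n pos.

Definition rho : R := ss d / 2.

Definition key (F : nat -> nat -> nat) (a b : nat) : nat := F (Nat.min a b) (Nat.max a b).

Definition Good (F : nat -> nat -> nat) (E : list (nat * nat)) : Prop :=
  forall v w1 w2, adj v w1 = true -> adj v w2 = true -> w1 <> w2 ->
    In (Nat.min v w1, Nat.max v w1) E -> In (Nat.min v w2, Nat.max v w2) E ->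
    rho * rho <= sqd (TanK pos d v w1 (key F v w1)) (TanK pos d v w2 (key F v w2)).

Lemma adj_facts a b : adj a b = true -> a <> b /\ (a < n)%nat /\ (b < n)%nat /\ pos a <> pos b.
Proof.
  intro H. destruct Hg as [Hs [Hi Hb]]. destruct (Hb a b H) as [Ha Hb'].
  assert (a <> b) by (intro E; subst; rewrite Hi in H; discriminate).
  repeat split; auto.
Qed.

Definition nb (v w : nat) : list nat := filter (fun x => andb (adj v x) (negb (Nat.eqb x w))) (seq 0 n).

Lemma nb_len v w : adj v w = true -> (length (nb v w) < d)%nat.
Proof.
  intro H. destruct (adj_facts v w H) as [_ [Hv [Hw _]]].
  apply (Nat.lt_le_trans _ (degree n adj v)).
  - unfold nb, degree. apply (filter_lt _ _ w).
    + intros x Hx. apply andb_prop in Hx; tauto.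
    + apply in_seq; lia.
    + auto.
    + rewrite H, Nat.eqb_refl; reflexivity.
  - apply Hdeg; auto.
Qed.

Lemma K_big : (2 * d < KK d)%nat.
Proof.
  pose proof (Nat.sqrt_spec d (Nat.le_0_l d)) as [_ H]. unfold KK, mm. nia.
Qed.

Definition Forb (F : nat -> nat -> nat) (c : nat * nat * nat) (k : nat) : Prop :=
  let '(v, w, x) := c in sqd (TanK pos d v w k) (TanK pos d v x (key F v x)) < rho * rho.

Lemma step F lo hi E' : (lo < hi)%nat -> adj lo hi = true -> Good F E' ->
  exists F', Good F' ((lo, hi) :: E').
Proof.
  intros Hlh Hadj HG.
  destruct (classic (In (lo, hi) E')) as [Hin|Hnin].
  { exists F. intros v w1 w2 H1 H2 H3 I1 I2. apply HG; auto.
    destruct I1 as [E|]; auto; rewrite <- E; auto.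
    destruct I2 as [E|]; auto; rewrite <- E; auto. }
  set (cs := map (fun x => (lo, hi, x)) (nb lo hi) ++ map (fun x => (hi, lo, x)) (nb hi lo)).
  destruct (adj_facts lo hi Hadj) as [Hne [Hlo [Hhi Hp]]].
  assert (Hadj' : adj hi lo = true) by (destruct Hg as [Hs _]; rewrite Hs; auto).
  destruct (pigeon (Forb F) cs (seq 0 (KK d))) as [k [Hk Hfree]].
  - apply seq_NoDup.
  - unfold cs. rewrite length_app, !length_map, length_seq.
    pose proof (nb_len lo hi Hadj). pose proof (nb_len hi lo Hadj'). pose proof K_big. lia.
  - intros c Hc i j Hi Hj Pi Pj. apply in_seq in Hi, Hj.
    destruct (Nat.eq_dec i j) as [|Hij]; auto. exfalso.
    assert (Hc' : exists v w x, c = (v, w, x) /\ v <> w /\ pos v <> pos w).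
    { unfold cs in Hc. apply in_app_or in Hc. destruct Hc as [Hc|Hc]; apply in_map_iff in Hc;
      destruct Hc as [x [<- _]]; eexists _, _, x; split; eauto. }
    destruct Hc' as [v [w [x [-> [Hvw Hpvw]]]]]. simpl in Pi, Pj.
    pose proof (tanK_sep pos d v w i j Hvw Hpvw ltac:(lia) ltac:(lia) Hij) as Hsep.
    pose proof (sqd_tri (TanK pos d v w i) (TanK pos d v x (key F v x)) (TanK pos d v w j)) as Ht.
    rewrite (sqd_sym (TanK pos d v x (key F v x)) (TanK pos d v w j)) in Ht.
    unfold rho in *. replace (ss d / 2 * (ss d / 2)) with (ss d * ss d / 4) in * by field. lra.
  - apply in_seq in Hk.
    exists (fun a b => if andb (Nat.eqb a lo) (Nat.eqb b hi) then k else F a b).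
    assert (Hnew : forall v w x, Nat.min v w = lo -> Nat.max v w = hi -> adj v x = true -> x <> w ->
              rho * rho <= sqd (TanK pos d v w k) (TanK pos d v x (key F v x))).
    { intros v w x E1 E2 Hx Hxw.
      destruct (adj_facts v x Hx) as [_ [_ [Hxn _]]].
      assert (Hcs : In (v, w, x) cs).
      { unfold cs. apply in_or_app.
        destruct (Nat.eq_dec v lo) as [->|Hv].
        - left. replace w with hi by lia. apply in_map. unfold nb. apply filter_In. split.
          apply in_seq; lia. rewrite Hx. simpl. apply Bool.negb_true_iff, Nat.eqb_neq. lia.
        - right. replace v with hi in * by lia. replace w with lo by lia. apply in_map.
          unfold nb. apply filter_In. split.
          apply in_seq; lia. rewrite Hx. simpl. apply Bool.negb_true_iff, Nat.eqb_neq. lia. }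
      specialize (Hfree _ Hcs). simpl in Hfree. lra. }
    intros v w1 w2 H1 H2 H3 I1 I2. unfold key.
    destruct (Nat.min v w1 =? lo) eqn:Ea1; destruct (Nat.max v w1 =? hi) eqn:Eb1;
    destruct (Nat.min v w2 =? lo) eqn:Ea2; destruct (Nat.max v w2 =? hi) eqn:Eb2; simpl;
    repeat match goal with H : (_ =? _) = true |- _ => apply Nat.eqb_eq in H end;
    repeat match goal with H : (_ =? _) = false |- _ => apply Nat.eqb_neq in H end;
    try (exfalso; lia);
    try (apply Hnew; auto; lia);
    try (rewrite sqd_sym; apply Hnew; auto; lia);
    try (apply HG; auto; [destruct I1 as [E|]; [injection E; lia|auto]
                         |destruct I2 as [E|]; [injection E; lia|auto]]).
Qed.
Lemma build E : (forall a b, In (a, b) E -> (a < b)%nat /\ adj a b = true) -> exists F, Good F E.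
Proof.
  induction E as [|[lo hi] E IH]; intros HE.
  - exists (fun _ _ => 0%nat). intros v w1 w2 _ _ _ [].
  - destruct IH as [F HF]. intros a b Hi; apply HE; right; auto.
    destruct (HE lo hi (or_introl eq_refl)). eapply step; eauto.
Qed.
End Build.

Theorem theorem3 :
  exists c : R, 0 < c /\
    forall (n : nat) (adj : nat -> nat -> bool) (pos : nat -> R * R) (d : nat),
      simple_graph n adj ->
      max_degree n adj d ->
      (1 <= d)%nat ->
      distinct_positions n pos ->
      exists Arc : nat -> nat -> arc,
        slanted_arc_drawing n adj pos Arc /\
        angular_resolution_ge n adj pos Arc (c / sqrt (INR d)).
Proof.
  exists (1/16). split; [lra|].
  intros n adj pos d Hg Hdeg Hd1 Hpos.
  set (E := filter (fun p => andb (Nat.ltb (fst p) (snd p)) (adj (fst p) (snd p)))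
                   (list_prod (seq 0 n) (seq 0 n))).
  destruct (build n adj pos d Hg Hdeg Hpos E) as [F HF].
  { intros a b Hi. unfold E in Hi. apply filter_In in Hi. destruct Hi as [_ Hi].
    apply andb_prop in Hi. destruct Hi as [H1 H2]. apply Nat.ltb_lt in H1. auto. }
  exists (fun a b => ArcK pos d a b (key F a b)).
  assert (HinE : forall a b, adj a b = true -> In (Nat.min a b, Nat.max a b) E).
  { intros a b Hab. destruct (adj_facts n adj pos Hg Hpos a b Hab) as [Hne [Ha [Hb _]]].
    unfold E. apply filter_In. split.
    - apply in_prod; apply in_seq; lia.
    - simpl. apply andb_true_intro. split. apply Nat.ltb_lt; lia.
      destruct (Nat.lt_gt_cases a b) as [[Hl|Hl] _]; auto.
      + rewrite Nat.min_l, Nat.max_r by lia; auto.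
      + rewrite Nat.min_r, Nat.max_l by lia. destruct Hg as [Hs _]; rewrite Hs; auto. }
  split.
  - intros a b Hab. destruct (adj_facts n adj pos Hg Hpos a b Hab) as [Hne [Ha [Hb Hp]]].
    split.
    + unfold key. rewrite ArcK_sym, Nat.min_comm, Nat.max_comm. reflexivity.
    + apply arcK_valid; auto.
  - intros v w1 w2 H1 H2 H3.
    destruct (adj_facts n adj pos Hg Hpos v w1 H1) as [Hne1 [_ [_ Hp1]]].
    destruct (adj_facts n adj pos Hg Hpos v w2 H2) as [Hne2 [_ [_ Hp2]]].
    rewrite !tanK_eq by auto.
    pose proof (HF v w1 w2 H1 H2 H3 (HinE _ _ H1) (HinE _ _ H2)) as Hsq.
    assert (Hrho : 0 <= rho d <= 1).
    { unfold rho, ss. pose proof (mm_pos d) as Hm.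
      assert (2 <= INR (mm d)) by (replace 2 with (INR 2) by (simpl; ring); apply le_INR; lia).
      assert (0 < / (2 * INR (mm d)) <= 1/4).
      { split. apply Rinv_0_lt_compat; lra.
        replace (1/4) with (/ 4) by field. apply Rinv_le_contravar; lra. }
      lra. }
    apply Rle_trans with (rho d).
    + unfold rho, ss, mm. rewrite mult_INR, plus_INR. simpl (INR 2). simpl (INR 1).
      pose proof (Nat.sqrt_spec d (Nat.le_0_l d)) as [Hs _].
      set (q := Nat.sqrt d) in *.
      assert (Hq : INR q <= sqrt (INR d)).
      { rewrite <- (sqrt_square (INR q)) by apply pos_INR. apply sqrt_le_1_alt.
        rewrite <- mult_INR. apply le_INR; auto. }
      assert (H1d : 1 <= sqrt (INR d)).
      { rewrite <- sqrt_1. apply sqrt_le_1_alt. replace 1 with (INR 1) by reflexivity. apply le_INR; auto. }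
      pose proof (pos_INR q).
      replace (1 / 16 / sqrt (INR d)) with (/ (16 * sqrt (INR d))) by (field; lra).
      match goal with |- _ <= ?r => replace r with (/ (8 * (INR q + 1))) by (field; lra) end.
      apply Rinv_le_contravar; lra.
    + apply angle_lb; auto; apply tanK_unit; auto.
Qed.
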